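(* In the setting below, let $y^*\in\mathbb{R}^m_+$ be a dual optimal solution, i.e. $(x^*,y^* )$ satisfies the KKT condition, and let $\hat x\in\mathcal{X}$ and $\beta>0$. 1. If $\|\hat x-x^*\|^2\le 2\beta$, then $\|y^*\|_1\ge h_1(\hat x,\beta):=r\big[\|\nabla G(\hat x)\|+L_X\sqrt{2\beta}\big]^{-1}$. 2. If $(y^* )^\top\mu\cdot\|\hat x-x^*\|^2\le 2\beta$, then $$\|y^*\|_1\ge h_2(\hat x,\beta):=\Big[\tfrac{L_X}{r}\sqrt{\tfrac{\beta}{2\underline{\mu}}}+\sqrt{\tfrac{L_X^2\beta}{2\underline{\mu}r^2}+\tfrac{\|\nabla G(\hat x)\|}{r}}\Big]^{-2}.$$
   Context: Problem: $\min_{x\in\mathbb{R}^n}f(x)$ s.t. $g_i(x)\le0$, $i=1,\dots,m$; $f$ convex, continuous, bounded below; each $g_i$ differentiable and $\mu_i$-strongly convex ($\mu_i>0$). $G(x)=(g_1(x),\dots,g_m(x))^\top$, $\nabla G(x)=[\nabla g_1(x),\dots,\nabla g_m(x)]\in\mathbb{R}^{n\times m}$, $\mu=(\mu_1,\dots,\mu_m)^\top$, $\underline{\mu}=\min_i\mu_i$; $\|\cdot\|$ is the Euclidean norm and the induced operator norm on matrices. KKT: $y^*\ge0$, $0\in\partial f(x^* )+\nabla G(x^* )y^*$, $\langle y^*,G(x^* )\rangle=0$. Standing assumptions: there is $\tilde x$ with $g_i(\tilde x)<0$ for all $i$; for every minimizer $x_0^*$ of $f$ some $g_i(x_0^* )>0$;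 $x^*$ is the (unique) optimal solution; $r$ is a known constant with $\min_{\xi\in\partial f(x^* )}\|\xi\|\ge r>0$. $\mathcal{X}=\mathcal{B}(\tilde x,\min_i 2\sqrt{-2g_i(x_i^* )/\mu_i})$ with $x_i^*=\arg\min g_i$. $L_X>0$ satisfies $\|\nabla G(x)-\nabla G(\bar x)\|\le L_X\|x-\bar x\|$ for all $x,\bar x\in\mathcal{X}$. *)

(* Defs.v *)
From HB Require Import structures.
From mathcomp Require Import all_boot all_order all_algebra.
From mathcomp Require Import classical_sets boolp reals.
Set Implicit Arguments. Unset Strict Implicit. Unset Printing Implicit Defensive.
Import Order.TTheory GRing.Theory Num.Theory.
Local Open Scope ring_scope.
Local Open Scope classical_set_scope.

Section Defs.
Variable R : realType.

Definition dotv (n : nat) (u v : 'cV[R]_n) : R := \sum_(k < n) u k 0 * v k 0.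
Definition enorm (n : nat) (u : 'cV[R]_n) : R := Num.sqrt (dotv u u).

Definition opnorm (n m : nat) (A : 'M[R]_(n, m)) : R :=
  sup [set enorm (A *m v) | v in [set v : 'cV[R]_m | enorm v <= 1]].

Definition l1norm (m : nat) (y : 'cV[R]_m) : R := \sum_(i < m) `|y i 0|.

Definition convex_fun (n : nat) (f : 'cV[R]_n -> R) : Prop :=
  forall (x y : 'cV[R]_n) (t : R), 0 <= t <= 1 ->
    f (t *: x + (1 - t) *: y) <= t * f x + (1 - t) * f y.

Definition strongly_convex (n : nat) (mu : R) (g : 'cV[R]_n -> R) : Prop :=
  forall (x y : 'cV[R]_n) (t : R), 0 <= t <= 1 ->
    g (t *: x + (1 - t) *: y) <=
      t * g x + (1 - t) * g y - mu / 2 * t * (1 - t) * enorm (x - y) ^+ 2.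

Definition econtinuous (n : nat) (f : 'cV[R]_n -> R) : Prop :=
  forall (x : 'cV[R]_n) (eps : R), 0 < eps -> exists2 delta : R, 0 < delta &
    forall y, enorm (y - x) < delta -> `|f y - f x| < eps.

Definition bounded_below (n : nat) (f : 'cV[R]_n -> R) : Prop :=
  exists c : R, forall x, c <= f x.

Definition is_gradient (n : nat) (g : 'cV[R]_n -> R) (x d : 'cV[R]_n) : Prop :=
  forall eps : R, 0 < eps -> exists2 delta : R, 0 < delta &
    forall y, enorm (y - x) < delta ->
      `|g y - g x - dotv d (y - x)| <= eps * enorm (y - x).

Definition subgrad (n : nat) (f : 'cV[R]_n -> R) (x xi : 'cV[R]_n) : Prop :=
  forall y, f x + dotv xi (y - x) <= f y.

(* nabla G(x) = [grad g_1(x), ..., grad g_m(x)] in R^{n x m} *)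
Definition jacG (n m : nat) (dg : 'I_m -> 'cV[R]_n -> 'cV[R]_n) (x : 'cV[R]_n)
  : 'M[R]_(n, m) := \matrix_(k < n, i < m) dg i x k 0.

Definition Gvec (n m : nat) (g : 'I_m -> 'cV[R]_n -> R) (x : 'cV[R]_n)
  : 'cV[R]_m := \col_(i < m) g i x.

Definition feasible (n m : nat) (g : 'I_m -> 'cV[R]_n -> R) (x : 'cV[R]_n) : Prop :=
  forall i, g i x <= 0.

(* the set X = closed ball B(xt, min_i 2 sqrt(-2 g_i(xs_i)/mu_i)) *)
Definition inX (n m : nat) (g : 'I_m -> 'cV[R]_n -> R) (mu : 'I_m -> R)
  (xs : 'I_m -> 'cV[R]_n) (xt x : 'cV[R]_n) : Prop :=
  forall i, enorm (x - xt) <= 2 * Num.sqrt (- 2 * g i (xs i) / mu i).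

End Defs.

(* Main.v *)
Require Import Defs.
From HB Require Import structures.
From mathcomp Require Import all_boot all_order all_algebra.
From mathcomp Require Import classical_sets boolp reals.
From mathcomp Require Import ring lra.
Import Order.TTheory GRing.Theory Num.Theory.
Local Open Scope ring_scope.

Section Helpers.
Context {R : realType}.
Implicit Types (n : nat).

Lemma dotv_ge0 {n} (u : 'cV[R]_n) : 0 <= dotv u u.
Proof. by rewrite /dotv; apply: sumr_ge0 => k _; rewrite -expr2 sqr_ge0. Qed.

Lemma enorm_ge0 {n} (u : 'cV[R]_n) : 0 <= enorm u.
Proof. exact: sqrtr_ge0. Qed.

Lemma enorm_sq {n} (u : 'cV[R]_n) : enorm u ^+ 2 = dotv u u.
Proof. by rewrite /enorm sqr_sqrtr // dotv_ge0. Qed.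

Lemma dotvC {n} (u v : 'cV[R]_n) : dotv u v = dotv v u.
Proof. by apply: eq_bigr => k _; rewrite mulrC. Qed.

Lemma dotvDl {n} (u v w : 'cV[R]_n) : dotv (u + v) w = dotv u w + dotv v w.
Proof. by rewrite /dotv -big_split; apply: eq_bigr => k _; rewrite !mxE mulrDl. Qed.

Lemma dotvZl {n} a (u w : 'cV[R]_n) : dotv (a *: u) w = a * dotv u w.
Proof. by rewrite /dotv mulr_sumr; apply: eq_bigr => k _; rewrite !mxE mulrA. Qed.

Lemma dotvNl {n} (u w : 'cV[R]_n) : dotv (- u) w = - dotv u w.
Proof. by rewrite -scaleN1r dotvZl mulN1r. Qed.

Lemma dotvDr {n} (u v w : 'cV[R]_n) : dotv w (u + v) = dotv w u + dotv w v.
Proof. by rewrite dotvC dotvDl !(dotvC w). Qed.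
Lemma dotvZr {n} a (u w : 'cV[R]_n) : dotv w (a *: u) = a * dotv w u.
Proof. by rewrite dotvC dotvZl dotvC. Qed.
Lemma dotvNr {n} (u w : 'cV[R]_n) : dotv w (- u) = - dotv w u.
Proof. by rewrite dotvC dotvNl dotvC. Qed.

Lemma dotv0 {n} (u : 'cV[R]_n) : dotv u u = 0 -> u = 0.
Proof.
move=> h; apply/matrixP => i j; rewrite ord1 mxE.
have : u i 0 * u i 0 = 0.
  apply: (psumr_eq0P (P := predT) (F := fun k => u k 0 * u k 0)) => //.
  by move=> k _; rewrite -expr2 sqr_ge0.
by move/eqP; rewrite mulf_eq0 orbb => /eqP.
Qed.

Lemma CS {n} (u v : 'cV[R]_n) : dotv u v <= enorm u * enorm v.
Proof.
set a := enorm u; set b := enorm v.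
have ha : 0 <= a := enorm_ge0 u. have hb : 0 <= b := enorm_ge0 v.
have H := dotv_ge0 (b *: u - a *: v).
rewrite !dotvDl !dotvDr !dotvNl !dotvNr !dotvZl !dotvZr (dotvC v u) in H.
rewrite -!enorm_sq -/a -/b in H.
have [a0|apos] := eqVneq a 0.
  have hu : u = 0 by apply: dotv0; rewrite -enorm_sq -/a a0 expr0n.
  rewrite hu /dotv big1 ?a0 ?mul0r // => k _; by rewrite mxE mul0r.
have [b0|bpos] := eqVneq b 0.
  have hv : v = 0 by apply: dotv0; rewrite -enorm_sq -/b b0 expr0n.
  rewrite hv /dotv big1 ?b0 ?mulr0 // => k _; by rewrite mxE mulr0.
have hab : 0 < a * b by rewrite mulr_gt0 // lt_neqAle eq_sym ?apos ?bpos.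
nra.
Qed.

Lemma enormD {n} (u v : 'cV[R]_n) : enorm (u + v) <= enorm u + enorm v.
Proof.
have hs : 0 <= enorm u + enorm v by rewrite addr_ge0 ?enorm_ge0.
rewrite -(ger0_norm hs) -sqrtr_sqr /enorm ler_sqrt ?sqr_ge0 //.
rewrite -/(enorm u) -/(enorm v) dotvDl !dotvDr (dotvC v u) -!enorm_sq.
have := CS u v; nra.
Qed.

Lemma enormN {n} (u : 'cV[R]_n) : enorm (- u) = enorm u.
Proof. by rewrite /enorm dotvNl dotvNr opprK. Qed.

Lemma enormB {n} (u v : 'cV[R]_n) : enorm (u - v) = enorm (v - u).
Proof. by rewrite -enormN opprB. Qed.

Lemma enormZ {n} a (u : 'cV[R]_n) : enorm (a *: u) = `|a| * enorm u.
Proof.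
by rewrite /enorm dotvZl dotvZr mulrA -expr2 sqrtrM ?sqr_ge0 // sqrtr_sqr.
Qed.

Lemma enorm0_eq {n} (u : 'cV[R]_n) : enorm u = 0 -> u = 0.
Proof. by move=> h; apply: dotv0; rewrite -enorm_sq h expr0n. Qed.

Lemma enorm_le_l1 {n} (u : 'cV[R]_n) : enorm u <= l1norm u.
Proof.
have hs : 0 <= l1norm u by rewrite /l1norm sumr_ge0.
rewrite -(ger0_norm hs) -sqrtr_sqr /enorm ler_sqrt ?sqr_ge0 //.
rewrite expr2 {2}/l1norm mulr_sumr /dotv; apply: ler_sum => k _.
have -> : u k 0 * u k 0 = `|u k 0| * `|u k 0|.
  by rewrite -normrM ger0_norm // -expr2 sqr_ge0.
rewrite ler_wpM2r //.
by rewrite /l1norm (bigD1 k) //= lerDl sumr_ge0.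
Qed.

Lemma coord_le {n} (v : 'cV[R]_n) j : `|v j 0| <= enorm v.
Proof.
have h : v j 0 ^+ 2 <= enorm v ^+ 2.
  rewrite enorm_sq /dotv (bigD1 j) //= expr2 lerDl sumr_ge0 // => k _.
  by rewrite -expr2 sqr_ge0.
have h2 := real_normK (num_real (v j 0)).
have h3 := normr_ge0 (v j 0). have h4 := enorm_ge0 v.
nra.
Qed.

Lemma opnorm_ub {n m} (A : 'M[R]_(n, m)) :
  has_ubound [set enorm (A *m v) | v in [set v : 'cV[R]_m | enorm v <= 1]].
Proof.
exists (\sum_i \sum_j `|A i j|) => _ [v /= hv <-].
apply: le_trans (enorm_le_l1 _) _; rewrite /l1norm; apply: ler_sum => i _.
rewrite mxE; apply: le_trans (ler_norm_sum _ _ _) _; apply: ler_sum => j _.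
rewrite normrM -[X in _ <= X]mulr1 ler_wpM2l //.
exact: le_trans (coord_le v j) hv.
Qed.

Lemma enorm0 {n} : enorm (0 : 'cV[R]_n) = 0.
Proof. by rewrite /enorm /dotv big1 ?sqrtr0 // => k _; rewrite mxE mul0r. Qed.

Lemma opnorm_ge0 {n m} (A : 'M[R]_(n, m)) : 0 <= opnorm A.
Proof.
rewrite /opnorm; have -> : (0:R) = enorm (A *m 0).
  by rewrite mulmx0 enorm0.
apply: ub_le_sup; first exact: opnorm_ub.
by exists 0 => //=; rewrite enorm0.
Qed.

Lemma opnorm_le {n m} (A : 'M[R]_(n, m)) v : enorm (A *m v) <= opnorm A * enorm v.
Proof.
have [h0|hpos] := eqVneq (enorm v) 0.
  by rewrite h0 mulr0 (enorm0_eq v h0) mulmx0 enorm0.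
have hp : 0 < enorm v by rewrite lt_neqAle eq_sym hpos enorm_ge0.
rewrite -ler_pdivrMr //.
have -> : enorm (A *m v) / enorm v = enorm (A *m ((enorm v)^-1 *: v)).
  by rewrite -scalemxAr enormZ ger0_norm ?invr_ge0 ?enorm_ge0 // mulrC.
apply: ub_le_sup; first exact: opnorm_ub.
exists ((enorm v)^-1 *: v) => //=.
by rewrite enormZ ger0_norm ?invr_ge0 ?enorm_ge0 // mulVf.
Qed.

Lemma growth {n} (mu : R) (g : 'cV[R]_n -> R) xs x : 0 < mu ->
  strongly_convex mu g -> (forall y, g xs <= g y) ->
  mu / 2 * enorm (x - xs) ^+ 2 <= g x - g xs.
Proof.
move=> mu0 hsc hmin.
set e2 := enorm (x - xs) ^+ 2.
have he2 : 0 <= e2 by rewrite /e2 sqr_ge0.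
set Q := mu / 2 * e2; set D := g x - g xs.
have hQ : 0 <= Q by rewrite /Q mulr_ge0 // divr_ge0 // ltW.
have key : forall t, 0 < t -> t <= 1 -> (1 - t) * Q <= D.
  move=> t t0 t1.
  have h1 := hsc x xs t ltac:(by rewrite (ltW t0) t1).
  have h2 := hmin (t *: x + (1 - t) *: xs).
  rewrite -/e2 in h1.
  have h3 : t * ((1 - t) * Q) <= t * D.
    rewrite /Q /D; move: h1 h2; set a := g (_ + _); lra.
  by rewrite -(ler_pM2l t0).
have hD : 0 <= D by have := key 1 ltr01 (lexx _); rewrite subrr mul0r.
rewrite leNgt; apply/negP => hlt.
have Qpos : 0 < Q by apply: le_lt_trans hlt.
set t := (Q - D) / (2 * Q).
have h2Q : 0 < 2 * Q by lra.
have ht0 : 0 < t by rewrite /t divr_gt0 //; lra.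
have ht1 : t <= 1 by rewrite /t ler_pdivrMr //; lra.
have := key t ht0 ht1.
have -> : (1 - t) * Q = (Q + D) / 2.
  rewrite /t; field; by rewrite gt_eqF.
lra.
Qed.

Lemma feas_dist {n} (mu : R) (g : 'cV[R]_n -> R) xs x : 0 < mu ->
  strongly_convex mu g -> (forall y, g xs <= g y) -> g x <= 0 ->
  enorm (x - xs) <= Num.sqrt (- 2 * g xs / mu).
Proof.
move=> mu0 hsc hmin hx.
have h := @growth n mu g xs x mu0 hsc hmin.
rewrite -(ger0_norm (enorm_ge0 (x - xs))) -sqrtr_sqr ler_sqrt.
  rewrite ler_pdivlMr //; lra.
have := hmin x; move=> ?; rewrite divr_ge0 ?(ltW mu0) //; lra.
Qed.
End Helpers.
Theorem proposition4 (R : realType) (n m : nat)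
  (f : 'cV[R]_n -> R) (g : 'I_m -> 'cV[R]_n -> R)
  (dg : 'I_m -> 'cV[R]_n -> 'cV[R]_n) (mu : 'I_m -> R) (mubar : R)
  (xt : 'cV[R]_n) (xs : 'I_m -> 'cV[R]_n) (xstar : 'cV[R]_n) (r LX : R)
  (ystar : 'cV[R]_m) (xhat : 'cV[R]_n) (beta : R) :
  (* f convex, continuous, bounded below *)
  convex_fun f -> econtinuous f -> bounded_below f ->
  (* each g_i differentiable with gradient dg i, and mu_i-strongly convex *)
  (forall i x, is_gradient (g i) x (dg i x)) ->
  (forall i, 0 < mu i) -> (forall i, strongly_convex (mu i) (g i)) ->
  (* mubar = min_i mu_i *)
  (forall i, mubar <= mu i) -> (exists i, mubar = mu i) ->
  (* Slater point *)
  (forall i, g i xt < 0) ->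
  (* every minimizer of f violates some constraint *)
  (forall x0, (forall x, f x0 <= f x) -> exists i, 0 < g i x0) ->
  (* xstar is the unique optimal solution *)
  feasible g xstar ->
  (forall x, feasible g x -> f xstar <= f x) ->
  (forall x, feasible g x -> (forall z, feasible g z -> f x <= f z) -> x = xstar) ->
  (* r *)
  0 < r -> (forall xi, subgrad f xstar xi -> r <= enorm xi) ->
  (* x_i^* = argmin g_i *)
  (forall i x, g i (xs i) <= g i x) ->
  (* L_X : Lipschitz constant of nabla G on X *)
  0 < LX ->
  (forall x xb, inX g mu xs xt x -> inX g mu xs xt xb ->
     opnorm (jacG dg x - jacG dg xb) <= LX * enorm (x - xb)) ->
  (* (xstar, ystar) satisfies KKT *)
  (forall i, 0 <= ystar i 0) ->
  (exists2 xi, subgrad f xstar xi & xi + jacG dg xstar *m ystar = 0) ->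
  dotv ystar (Gvec g xstar) = 0 ->
  (* xhat in X, beta > 0 *)
  inX g mu xs xt xhat -> 0 < beta ->
  (enorm (xhat - xstar) ^+ 2 <= 2 * beta ->
     r / (opnorm (jacG dg xhat) + LX * Num.sqrt (2 * beta)) <= l1norm ystar)
  /\
  (dotv ystar (\col_i mu i) * enorm (xhat - xstar) ^+ 2 <= 2 * beta ->
     ((LX / r * Num.sqrt (beta / (2 * mubar))
       + Num.sqrt (LX ^+ 2 * beta / (2 * mubar * r ^+ 2)
                   + opnorm (jacG dg xhat) / r)) ^+ 2)^-1 <= l1norm ystar).
Proof.
move=> fconv fcont fbb hgrad mupos hsc mubar_le [i0 hi0] hslater hmin feas xopt xuniq
  r0 hr hxs LX0 hlip ypos [xi hxi hK] hcs hxhat beta0.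
set s := l1norm ystar; set a := opnorm (jacG dg xhat); set d := enorm (xhat - xstar).
have hs0 : 0 <= s by rewrite /s /l1norm sumr_ge0.
have ha0 : 0 <= a := opnorm_ge0 _.
have hd0 : 0 <= d := enorm_ge0 _.
have hstarX : inX g mu xs xt xstar.
  move=> i.
  have h1 := @feas_dist R n (mu i) (g i) (xs i) xstar (mupos i) (hsc i) (hxs i) (feas i).
  have h2 := @feas_dist R n (mu i) (g i) (xs i) xt (mupos i) (hsc i) (hxs i) (ltW (hslater i)).
  have -> : xstar - xt = (xstar - xs i) + (xs i - xt) by rewrite addrA subrK.
  apply: le_trans (enormD _ _) _; rewrite (enormB (xs i)); lra.
have hlipd : opnorm (jacG dg xstar - jacG dg xhat) <= LX * d.
  by rewrite /d enormB; apply: hlip.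
have key : r <= (a + LX * d) * s.
  apply: le_trans (hr _ hxi) _.
  have -> : xi = - (jacG dg xstar *m ystar) by apply/eqP; rewrite -addr_eq0 hK.
  rewrite enormN.
  have -> : jacG dg xstar *m ystar = jacG dg xhat *m ystar
      + (jacG dg xstar - jacG dg xhat) *m ystar by rewrite mulmxBl addrC subrK.
  apply: le_trans (enormD _ _) _.
  have h1 := opnorm_le (jacG dg xhat) ystar.
  have h2 := opnorm_le (jacG dg xstar - jacG dg xhat) ystar.
  have h3 := enorm_le_l1 ystar.
  have h4 := opnorm_ge0 (jacG dg xstar - jacG dg xhat).
  have h5 := enorm_ge0 ystar.
  rewrite -/a -/s in h1 h2 h3 *.
  nra.
split.
  move=> hd.
  have hdle : d <= Num.sqrt (2 * beta).
    rewrite -(ger0_norm hd0) -sqrtr_sqr ler_sqrt //; lra.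
  have hsq := sqrtr_ge0 (2 * beta).
  have hD : 0 < a + LX * Num.sqrt (2 * beta).
    have : 0 < Num.sqrt (2 * beta) by rewrite sqrtr_gt0; lra.
    move=> hq; have := mulr_gt0 LX0 hq; lra.
  have hm : LX * d * s <= LX * Num.sqrt (2 * beta) * s.
    by rewrite ler_wpM2r // ler_wpM2l // ltW.
  rewrite ler_pdivrMr //; lra.
move=> hP.
have hmub : 0 < mubar by rewrite hi0.
have hPs : mubar * s <= dotv ystar (\col_i mu i).
  rewrite /s /l1norm mulr_sumr /dotv; apply: ler_sum => k _.
  rewrite mxE ger0_norm // mulrC; exact: ler_wpM2l.
set P := dotv ystar _ in hP hPs.
have hd2 : 0 <= d ^+ 2 by rewrite sqr_ge0.
have hsd : mubar * s * d ^+ 2 <= 2 * beta.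
  by apply: le_trans hP; rewrite ler_wpM2r.
have hspos : 0 < s.
  rewrite lt_neqAle hs0 andbT; apply/eqP => hs; rewrite -hs mulr0 in key; lra.
set u := Num.sqrt s.
have hu : u ^+ 2 = s by rewrite sqr_sqrtr.
have hu0 : 0 < u by rewrite sqrtr_gt0.
set k2 := Num.sqrt (beta / (2 * mubar)).
have hk2 : k2 ^+ 2 = beta / (2 * mubar) by rewrite sqr_sqrtr // divr_ge0 // ?mulr_ge0 // ltW.
have hk20 : 0 <= k2 := sqrtr_ge0 _.
have hk2b : mubar * (4 * k2 ^+ 2) = 2 * beta by rewrite hk2; field; rewrite gt_eqF.
set e := d * u.
have he0 : 0 <= e by rewrite mulr_ge0 // ltW.
have he2 : mubar * e ^+ 2 <= mubar * (4 * k2 ^+ 2).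
  rewrite hk2b /e exprMn hu.
  by have -> : mubar * (d ^+ 2 * s) = mubar * s * d ^+ 2 by ring.
have hek : e <= 2 * k2.
  rewrite ler_pM2l // in he2; nra.
set c := LX / r * k2.
set S := Num.sqrt (LX ^+ 2 * beta / (2 * mubar * r ^+ 2) + a / r).
have hinner : LX ^+ 2 * beta / (2 * mubar * r ^+ 2) = c ^+ 2.
  rewrite /c exprMn hk2; field; rewrite ?gt_eqF //.
have hS2 : S ^+ 2 = c ^+ 2 + a / r.
  have hin0 : 0 <= LX ^+ 2 * beta / (2 * mubar * r ^+ 2) + a / r.
    by rewrite hinner addr_ge0 ?sqr_ge0 // divr_ge0 // ltW.
  by rewrite /S sqr_sqrtr // hinner.
have hS0 : 0 <= S := sqrtr_ge0 _.
have hc0 : 0 <= c by rewrite /c mulr_ge0 // divr_ge0 // ltW.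
have hrc : r * c = LX * k2 by rewrite /c mulrA mulrCA divff ?mulr1 // gt_eqF.
have hra : r * (a / r) = a by rewrite mulrCA divff ?mulr1 // gt_eqF.
have key2 : r <= a * u ^+ 2 + LX * e * u.
  have -> : LX * e * u = LX * d * s by rewrite /e -hu; ring.
  rewrite hu; apply: le_trans key _; rewrite mulrDl; lra.
have key3 : r <= a * u ^+ 2 + 2 * (LX * k2) * u.
  apply: le_trans key2 _; rewrite lerD2l.
  have := ler_wpM2l (mulr_ge0 (ltW LX0) (ltW hu0)) hek.
  have -> : LX * u * e = LX * e * u by ring.
  by have -> : LX * u * (2 * k2) = 2 * (LX * k2) * u by ring.
have key4 : 1 <= (a / r) * u ^+ 2 + 2 * c * u.
  have E : r * ((a / r) * u ^+ 2 + 2 * c * u) = a * u ^+ 2 + 2 * (LX * k2) * u.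
    by rewrite mulrDr mulrA hra -hrc; ring.
  by rewrite -(ler_pM2l r0) mulr1 E.
have key5 : 1 <= u * (c + S).
  rewrite leNgt; apply/negP => hlt.
  have hq : u * S < 1 - u * c by lra.
  have hq0 : 0 <= u * S by rewrite mulr_ge0 // ltW.
  have hq2 : (u * S) ^+ 2 < (1 - u * c) ^+ 2.
    by rewrite ltr_pXn2r // ?nnegrE; lra.
  move: hq2; rewrite !exprMn hS2; nra.
have hcS : 0 < c + S.
  rewrite lt_neqAle addr_ge0 // andbT; apply/eqP => h0; move: key5; rewrite -h0 mulr0; lra.
have hpos : 0 < (c + S) ^+ 2 by rewrite exprn_gt0.
rewrite -hu -[X in X <= _]div1r ler_pdivrMr // -exprMn.
have : 1 <= (u * (c + S)) ^+ 2 by nra.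
by [].
Qed.
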